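(* Let $n\ge 1$ and let $\mathcal{R},\mathcal{S}\subseteq 2^{[n]}$ be clutters such that for every partition $[n]=E_0\uplus E_1$ exactly one of the following holds: some member of $\mathcal{R}$ is contained in $E_0$, or some member of $\mathcal{S}$ is contained in $E_1$. Let $K:=2^{[n]}\setminus\widehat{\mathcal{R}}$, where $\widehat{\mathcal{R}}=\{A\subseteq [n]\mid \exists X\in\mathcal{R},\ X\subseteq A\}$, and let $K^\circ=\{[n]\setminus A\mid A\notin K\}$ be its Alexander dual. Suppose $[n]=A_1\uplus\{i\}\uplus A_2$ where every element of $A_1$ is smaller than $i$, every element of $A_2$ is larger than $i$, $A_1\in K$ and $A_2\in K^\circ$ (i.e. $(A_1,A_2;\{i\})$ is the $(n-2)$-dimensional critical simplex of the perfect discrete Morse function on the Bier sphere $K\ast_\Delta K^\circ$). Then \[\min_{I\in\mathcal{R}}\max_{x\in I} x \;=\; i \;=\; \max_{J\in\mathcal{S}}\min_{x\in J} x.\]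
   Context: A clutter on a finite set is a family of subsets none of which contains another. The Bier sphere $Bier(K)=K\ast_\Delta K^\circ$ is the deleted join of $K$ and its Alexander dual; its faces are written as triples $(A_1,A_2;B)$ with $A_1\in K$, $A_2\in K^\circ$, $A_1\cap A_2=\emptyset$ and $B=[n]\setminus(A_1\cup A_2)$. (The real function $f$ on the ground set in the Edmonds–Fulkerson setting is here taken to be the identity on $[n]$.) *)

(* Defs.v *)
From mathcomp Require Import all_boot.
Set Implicit Arguments. Unset Strict Implicit. Unset Printing Implicit Defensive.

(* Ground set [n] is modelled by 'I_n (elements 0..n-1, ordered by value). *)

Definition clutter (n : nat) (F : {set {set 'I_n}}) : Prop :=
  forall A B, A \in F -> B \in F -> A \subset B -> A = B.

Definition upclosure (n : nat) (R : {set {set 'I_n}}) : {set {set 'I_n}} :=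
  [set A : {set 'I_n} | [exists X in R, X \subset A]].

Definition complexK (n : nat) (R : {set {set 'I_n}}) : {set {set 'I_n}} :=
  ~: upclosure R.

Definition alexander_dual (n : nat) (K : {set {set 'I_n}}) : {set {set 'I_n}} :=
  [set ~: A | A in ~: K].

(* Main.v *)
Require Import Defs.
From mathcomp Require Import all_boot.

Lemma bigmin_le (T : finType) (P : pred T) (F : T -> nat) m x :
  P x -> (\big[minn/m]_(j | P j) F j <= F x)%N.
Proof.
move=> Px; have : x \in index_enum T by rewrite mem_index_enum.
elim: (index_enum T) => // a s IH; rewrite inE big_cons => /orP [/eqP <- | xs].
  by rewrite Px geq_minl.
case: (P a) => /=; [apply: leq_trans (geq_minr _ _) _ | ]; exact: IH.
Qed.

Theorem mainTheorem2 (n : nat) (R S : {set {set 'I_n}}) (A1 A2 : {set 'I_n}) (i : 'I_n) :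
  0 < n ->
  clutter R -> clutter S ->
  (forall E0 : {set 'I_n},
     [exists X in R, X \subset E0] != [exists Y in S, Y \subset ~: E0]) ->
  [disjoint A1 & A2] -> i \notin A1 -> i \notin A2 ->
  A1 :|: [set i] :|: A2 = [set: 'I_n] ->
  (forall x, x \in A1 -> (x < i)%N) ->
  (forall x, x \in A2 -> (i < x)%N) ->
  A1 \in complexK R ->
  A2 \in alexander_dual (complexK R) ->
  \big[minn/n]_(I in R) (\max_(x in I) nat_of_ord x) = nat_of_ord i /\
  nat_of_ord i = \max_(J in S) (\big[minn/n]_(x in J) nat_of_ord x).
Proof.
move=> n0 _ _ HE hdis hi1 hi2 hcov h1 h2 hK1 hK2.
have memx : forall x : 'I_n, [|| x \in A1, x == i | x \in A2].
  move=> x; have : x \in A1 :|: [set i] :|: A2 by rewrite hcov inE.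
  by rewrite !inE orbA.
have nA2 : forall x : 'I_n, x \notin A2 -> (x <= i)%N.
  move=> x hx; case/or3P: (memx x) => [/h1/ltnW //| /eqP -> // | ]; by rewrite (negbTE hx).
have nA1 : forall x : 'I_n, x \notin A1 -> (i <= x)%N.
  move=> x hx; case/or3P: (memx x) => [| /eqP -> // | /h2/ltnW //]; by rewrite (negbTE hx).
have ilt : (i <= n)%N by apply: ltnW.
move: hK1; rewrite /complexK /upclosure !inE => /existsPn hK1.
case/imsetP: hK2 => A; rewrite /complexK /upclosure !inE negbK => /existsP [X /andP [XR XA]] eA2.
have XA2 : X \subset ~: A2 by rewrite eA2 setCK.
have iX : i \in X.
  case: (boolP (i \in X)) => // niX.
  have : X \subset A1.
    apply/subsetP => x xX; have := subsetP XA2 x xX; rewrite inE => nx.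
    case/or3P: (memx x) => [//| /eqP ex | ]; last by rewrite (negbTE nx).
    by move: xX; rewrite ex (negbTE niX).
  by have := hK1 X; rewrite XR /= => /negbTE ->.
split.
  apply/eqP; rewrite eqn_leq; apply/andP; split.
    apply: leq_trans (@bigmin_le _ _ _ _ _ XR) _.
    apply/bigmax_leqP => x xX; apply: nA2; have := subsetP XA2 x xX; by rewrite inE.
  apply: (big_ind (fun v => i <= v)%N) => //.
    by move=> a b ha hb; rewrite leq_min ha hb.
  move=> I IR.
  have : ~~ (I \subset A1) by have := hK1 I; rewrite IR.
  case/subsetPn => x xI xA1.
  by apply: leq_trans (nA1 _ xA1) _; apply: (leq_bigmax_cond x).
have HE1 := HE A1.
have nR1 : [exists X in R, X \subset A1] = false.
  by apply/negbTE/existsPn => Y; rewrite negb_and; have := hK1 Y; rewrite negb_and.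
move: HE1; rewrite nR1; case: existsP => // -[Y /andP [YS YA1]] _.
have HE2 := HE (A1 :|: [set i]).
have R2 : [exists X in R, X \subset A1 :|: [set i]].
  apply/existsP; exists X; rewrite XR /=; apply: subset_trans XA2 _.
  apply/subsetP => x; rewrite !inE => nx.
  case/or3P: (memx x) => [-> // | -> | ]; [by rewrite orbT | by rewrite (negbTE nx)].
rewrite R2 /= in HE2.
have cA : ~: (A1 :|: [set i]) = A2.
  apply/setP => x; rewrite !inE.
  case: (boolP (x \in A2)) => xa.
    have := h2 _ xa => ix.
    have -> : (x == i) = false by apply/negbTE; apply: contraTneq ix => ->; rewrite ltnn.
    have -> : (x \in A1) = false by apply/negP => /h1 xi; have := ltn_trans xi ix; rewrite ltnn.
    by [].
  by have := memx x; rewrite (negbTE xa) orbF; case: (x \in A1); case: (x == i).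
have nS2 : forall J, J \in S -> ~~ (J \subset A2).
  move=> J JS; apply: contraNN HE2 => JA; apply/existsP; exists J; by rewrite JS cA.
have iY : i \in Y.
  case: (boolP (i \in Y)) => // niY; have := nS2 _ YS; case/subsetPn => x xY xA2.
  have := subsetP YA1 x xY; rewrite inE => xA1.
  by have := memx x; rewrite (negbTE xA1) (negbTE xA2) orbF /= => /eqP ex; move: xY; rewrite ex (negbTE niY).
apply/eqP; rewrite eqn_leq; apply/andP; split.
  apply: leq_trans _ (leq_bigmax_cond _ YS).
  apply: (big_ind (fun v => i <= v)%N) => //.
    by move=> a b ha hb; rewrite leq_min ha hb.
  move=> x xY; apply: nA1; have := subsetP YA1 x xY; by rewrite inE.
apply/bigmax_leqP => J JS.
case/subsetPn: (nS2 _ JS) => x xJ xA2.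
apply: leq_trans (@bigmin_le _ _ _ _ _ xJ) _; exact: nA2.
Qed.
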